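(* Consider a one-site PTM cascade with $n\ge1$ layers and positive total amounts. For each $i=0,\dots,n-1$ there is $\beta_i\in(0,\infty)$ such that: (a) $f_i$ is a continuous increasing function on $[0,\beta_i)$ with $f_i(0)=0$, mapping $[0,\beta_i)$ onto $[0,\infty)$; $\beta_i$ is the smallest positive singularity of $f_i$, and $d_{i+1}\big(f_{i+1}(\beta_i),f_{i+2}^Y(\beta_i)\big)=0$; (b) at the BMSS, $S_n^1\in[0,\beta_i)$ and $S_i^1=f_i(S_n^1)$ (with $S_0^1=E$); $f_i$ depends only on rate constants and on $\overline{F}_j,\overline{S}_j$ for $j\ge i+1$, and $f_i(s)=\frac{\lambda_{i+1}\cdots\lambda_n\overline{F}_{i+1}\cdots\overline{F}_n\,s}{d_{i+1}(f_{i+1}(s),f^Y_{i+2}(s))\cdots d_n(f_n(s),0)}$; (c) $\beta_{n-1}=\alpha_n$ and $\beta_i<\beta_{i+1}$ for $i<n-1$; (d) if all parameters except $\overline{S}_{i+1}$ are fixed and $\overline{S}_{i+1}\to+\infty$, then $\beta_i\to\beta_{i+1}$, where $\beta_n:=+\infty$; (e) at the BMSS, $S_j^1<\alpha_j$ for every $j=1,\dots,n$.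
   Context: A one-site PTM cascade with $n$ layers has species $E=S_0^1$ and, for $i=1,\dots,n$, $S_i^0,S_i^1,F_i,Y_i^0,Y_i^1$, with reactions $S_{i-1}^1+S_i^0 \rightleftharpoons Y_i^0 \to S_{i-1}^1+S_i^1$ (rate constants $a_i^0,b_i^0,c_i^0$) and $F_i+S_i^1\rightleftharpoons Y_i^1\to F_i+S_i^0$ (rate constants $a_i^1,b_i^1,c_i^1$), all positive, mass-action kinetics. Put $\delta_i=a_i^1/(b_i^1+c_i^1)$, $\gamma_i=(c_i^1/c_i^0)\delta_i$, $\lambda_i=\frac{b_i^0+c_i^0}{a_i^0}\gamma_i$. Given total amounts $\overline{E},\overline{F}_i,\overline{S}_i$, a steady state is a real solution of: $Y_i^0=\gamma_iF_iS_i^1$, $Y_i^1=\delta_iF_iS_i^1$, $\lambda_iF_iS_i^1=S_i^0S_{i-1}^1$, $\overline{F}_i=F_i+Y_i^1$, $\overline{S}_i=S_i^0+S_i^1+Y_i^0+Y_i^1+Y_{i+1}^0$ ($i=1,\dots,n$, $Y_{n+1}^0:=0$), $\overline{E}=E+Y_1^0$. A BMSS is a steady state with positive total amounts and all concentrations nonnegative; it exists and is unique. Increasing means strictly increasing. Define for $i=1,\dots,n$: $d_i(x,y)=(\overline{S}_i-y)-x-\overline{F}_i(\delta_i+\gamma_i)x+\delta_i(\overline{S}_i-y)x-\delta_ix^2$, and let $\alpha_i$ be the unique positive root of $x\mapsto d_i(x,0)$. Let $g_i^Y(x)=\frac{\gamma_i\overline{F}_ix}{1+\delta_ix}$. Define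 rational functions of $s$ recursively: $f_n(s)=s$, $f_{n+1}^Y(s)=0$, and for $i=n,\dots,1$: $f_i^Y(s)=g_i^Y(f_i(s))$, $f_{i-1}(s)=\frac{\lambda_i\overline{F}_if_i(s)}{d_i(f_i(s),f_{i+1}^Y(s))}$. *)

(* Defs.v *)
From Stdlib Require Import Reals Lra Lia Arith.
Open Scope R_scope.

(* Parameters of a one-site PTM cascade: rate constants a_i^0,b_i^0,c_i^0,
   a_i^1,b_i^1,c_i^1 and total amounts Fbar_i, Sbar_i (indexed by i = 1..n)
   and Ebar. *)
Record cascade := mkCascade {
  a0 : nat -> R; b0 : nat -> R; c0 : nat -> R;
  a1 : nat -> R; b1 : nat -> R; c1 : nat -> R;
  Fb : nat -> R; Sb : nat -> R; Eb : R }.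

Definition params_pos (p : cascade) (n : nat) : Prop :=
  0 < Eb p /\
  forall i, (1 <= i <= n)%nat ->
    0 < a0 p i /\ 0 < b0 p i /\ 0 < c0 p i /\
    0 < a1 p i /\ 0 < b1 p i /\ 0 < c1 p i /\
    0 < Fb p i /\ 0 < Sb p i.

Definition same_rates (p q : cascade) : Prop :=
  a0 p = a0 q /\ b0 p = b0 q /\ c0 p = c0 q /\
  a1 p = a1 q /\ b1 p = b1 q /\ c1 p = c1 q.

Definition setSb (p : cascade) (k : nat) (t : R) : cascade :=
  mkCascade (a0 p) (b0 p) (c0 p) (a1 p) (b1 p) (c1 p) (Fb p)
            (fun j => if Nat.eqb j k then t else Sb p j) (Eb p).

Definition delta (p : cascade) (i : nat) : R := a1 p i / (b1 p i + c1 p i).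
Definition gamma (p : cascade) (i : nat) : R := (c1 p i / c0 p i) * delta p i.
Definition lam (p : cascade) (i : nat) : R :=
  (b0 p i + c0 p i) / a0 p i * gamma p i.

Definition d (p : cascade) (i : nat) (x y : R) : R :=
  (Sb p i - y) - x - Fb p i * (delta p i + gamma p i) * x
  + delta p i * (Sb p i - y) * x - delta p i * x ^ 2.

Definition gY (p : cascade) (i : nat) (x : R) : R :=
  gamma p i * Fb p i * x / (1 + delta p i * x).

(* fpair p n k s = (f_{n-k}(s), f^Y_{n-k+1}(s)) for k <= n, following the
   recursion f_n(s)=s, f^Y_{n+1}(s)=0, f^Y_i = g^Y_i(f_i),
   f_{i-1} = lambda_i Fbar_i f_i / d_i(f_i, f^Y_{i+1}). *)
Fixpoint fpair (p : cascade) (n k : nat) (s : R) : R * R :=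
  match k with
  | O => (s, 0)
  | S k' =>
      let (fi, fYi1) := fpair p n k' s in
      let i := (n - k')%nat in
      (lam p i * Fb p i * fi / d p i fi fYi1, gY p i fi)
  end.

Definition ff (p : cascade) (n i : nat) (s : R) : R := fst (fpair p n (n - i) s).
Definition fY (p : cascade) (n i : nat) (s : R) : R := snd (fpair p n (n + 1 - i) s).

(* product of g j over i < j <= m *)
Fixpoint prodR (g : nat -> R) (i m : nat) : R :=
  match m with
  | O => 1
  | S m' => if Nat.ltb i (S m') then prodR g i m' * g (S m') else 1
  end.

(* A (pole-type) singularity of a real function g at x: g is unbounded in
   every punctured neighbourhood of x. *)
Definition singular_at (g : R -> R) (x : R) : Prop :=
  forall M eps, 0 < eps -> exists t, t <> x /\ Rabs (t - x) < eps /\ M < Rabs (g t).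

Definition min_pos_sing (g : R -> R) (b : R) : Prop :=
  0 < b /\ singular_at g b /\ (forall s, 0 < s < b -> ~ singular_at g s).

Definition cont_on_Ico (g : R -> R) (a b : R) : Prop :=
  forall x, a <= x < b -> forall eps, 0 < eps -> exists del, 0 < del /\
    forall y, a <= y < b -> Rabs (y - x) < del -> Rabs (g y - g x) < eps.

Definition incr_on_Ico (g : R -> R) (a b : R) : Prop :=
  forall x y, a <= x < b -> a <= y < b -> x < y -> g x < g y.

Definition onto_nonneg_Ico (g : R -> R) (a b : R) : Prop :=
  (forall x, a <= x < b -> 0 <= g x) /\
  (forall y, 0 <= y -> exists x, a <= x < b /\ g x = y).

(* Steady state: concentrations S^0_i, S^1_i, F_i, Y^0_i, Y^1_i (i=1..n),
   with E = S^1_0 stored as S1 0. *)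
Definition steady_state (p : cascade) (n : nat)
  (S0 S1 F Y0 Y1 : nat -> R) : Prop :=
  (forall i, (1 <= i <= n)%nat ->
     Y0 i = gamma p i * F i * S1 i /\
     Y1 i = delta p i * F i * S1 i /\
     lam p i * F i * S1 i = S0 i * S1 (i - 1)%nat /\
     Fb p i = F i + Y1 i /\
     Sb p i = S0 i + S1 i + Y0 i + Y1 i
              + (if Nat.eqb i n then 0 else Y0 (S i))) /\
  Eb p = S1 O + Y0 1%nat.

(* BMSS: steady state with all concentrations nonnegative
   (total amounts are positive by the standing hypothesis). *)
Definition BMSS (p : cascade) (n : nat) (S0 S1 F Y0 Y1 : nat -> R) : Prop :=
  steady_state p n S0 S1 F Y0 Y1 /\
  0 <= S1 O /\
  (forall i, (1 <= i <= n)%nat ->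
     0 <= S0 i /\ 0 <= S1 i /\ 0 <= F i /\ 0 <= Y0 i /\ 0 <= Y1 i).

(* Main.v *)
Require Import Defs.
From Stdlib Require Import Reals Lra Lia Psatz Ranalysis Ranalysis5.
Open Scope R_scope.

Lemma cp_eps f x : continuity_pt f x -> forall eps, 0 < eps -> exists del, 0 < del /\
  forall y, Rabs (y - x) < del -> Rabs (f y - f x) < eps.
Proof.
  intros H eps He. destruct (H eps He) as [a [Ha Hy]]. exists a; split; auto.
  intros y Hyx. destruct (Req_dec y x) as [->|Hne].
  - rewrite Rminus_diag, Rabs_R0; auto.
  - apply (Hy y). split; [split; [exact I|auto]|exact Hyx].
Qed.

Lemma cp_plus f g x : continuity_pt f x -> continuity_pt g x -> continuity_pt (fun t => f t + g t) x.
Proof. intros; exact (continuity_pt_plus f g x H H0). Qed.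
Lemma cp_minus f g x : continuity_pt f x -> continuity_pt g x -> continuity_pt (fun t => f t - g t) x.
Proof. intros; exact (continuity_pt_minus f g x H H0). Qed.
Lemma cp_mult f g x : continuity_pt f x -> continuity_pt g x -> continuity_pt (fun t => f t * g t) x.
Proof. intros; exact (continuity_pt_mult f g x H H0). Qed.
Lemma cp_div f g x : continuity_pt f x -> continuity_pt g x -> g x <> 0 -> continuity_pt (fun t => f t / g t) x.
Proof. intros; exact (continuity_pt_div f g x H H0 H1). Qed.
Lemma cp_opp f x : continuity_pt f x -> continuity_pt (fun t => - f t) x.
Proof. intros; exact (continuity_pt_opp f x H). Qed.
Lemma cp_const c x : continuity_pt (fun _ => c) x.
Proof. apply continuity_pt_const. intros a b; reflexivity. Qed.
Lemma cp_id x : continuity_pt (fun t => t) x.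
Proof. apply derivable_continuous_pt, derivable_pt_id. Qed.
Lemma cp_pow f x m : continuity_pt f x -> continuity_pt (fun t => f t ^ m) x.
Proof. intros H; induction m; simpl. apply cp_const. apply (cp_mult f (fun t => f t ^ m)); auto. Qed.
Lemma cp_ext f g x : (forall t, f t = g t) -> continuity_pt f x -> continuity_pt g x.
Proof. intros E H. apply (continuity_pt_locally_ext f g 1 x Rlt_0_1); auto. Qed.

Lemma cp_d p j x y s : continuity_pt x s -> continuity_pt y s ->
  continuity_pt (fun t => d p j (x t) (y t)) s.
Proof.
  intros Hx Hy. unfold d.
  repeat first [ assumption | apply cp_plus | apply cp_minus | apply cp_opp | apply cp_mult | apply cp_pow | apply cp_const ].
Qed.

Definition lpos (p : cascade) j :=
  0 < delta p j /\ 0 < gamma p j /\ 0 < lam p j /\ 0 < Fb p j /\ 0 < Sb p j.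

Lemma lpos_of p n j : params_pos p n -> (1 <= j <= n)%nat -> lpos p j.
Proof.
  intros [_ H] Hj. destruct (H j Hj) as (h1&h2&h3&h4&h5&h6&h7&h8).
  unfold lpos, delta, gamma, lam.
  assert (0 < a1 p j / (b1 p j + Defs.c1 p j)) by (apply Rdiv_lt_0_compat; lra).
  assert (0 < Defs.c1 p j / c0 p j * (a1 p j / (b1 p j + Defs.c1 p j))).
  { apply Rmult_lt_0_compat; auto. apply Rdiv_lt_0_compat; lra. }
  repeat split; auto.
  apply Rmult_lt_0_compat; auto. apply Rdiv_lt_0_compat; lra.
Qed.

Lemma d_alt p j x y : d p j x y =
  (1 + delta p j * x) * (Sb p j - y - x) - Fb p j * (delta p j + gamma p j) * x.
Proof. unfold d. ring. Qed.

Lemma d_mono p j xs xt ys yt : lpos p j -> 0 <= xs -> xs < xt -> ys <= yt ->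
  d p j xt yt * (1 + delta p j * xs) < d p j xs ys * (1 + delta p j * xt).
Proof.
  intros (hd&hg&hl&hF&hS) h1 h2 h3.
  assert (E : d p j xs ys * (1 + delta p j * xt) - d p j xt yt * (1 + delta p j * xs)
     = (1 + delta p j * xs) * (1 + delta p j * xt) * ((yt - ys) + (xt - xs))
       + Fb p j * (delta p j + gamma p j) * (xt - xs)).
  { rewrite !d_alt. ring. }
  assert (0 < (1 + delta p j * xs) * (1 + delta p j * xt)) by
    (apply Rmult_lt_0_compat; nra).
  assert (0 <= Fb p j * (delta p j + gamma p j) * (xt - xs)).
  { apply Rmult_le_pos; [|lra]. apply Rmult_le_pos; lra. }
  assert (0 < (1 + delta p j * xs) * (1 + delta p j * xt) * ((yt - ys) + (xt - xs)))
    by (apply Rmult_lt_0_compat; lra).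
  lra.
Qed.

Lemma d_pos_big p j x y X Y t : lpos p j -> 0 <= x <= X -> 0 <= y <= Y ->
  Y + X + Fb p j * (delta p j + gamma p j) * X < t ->
  0 < (1 + delta p j * x) * (t - y - x) - Fb p j * (delta p j + gamma p j) * x.
Proof.
  intros (hd&hg&hl&hF&hS) [hx1 hx2] [hy1 hy2] ht.
  remember (Fb p j * (delta p j + gamma p j)) as c eqn:Hc.
  assert (0 < c) by (subst c; apply Rmult_lt_0_compat; lra).
  assert (c * x <= c * X) by (apply Rmult_le_compat_l; lra).
  assert (0 <= delta p j * x) by (apply Rmult_le_pos; lra).
  assert (0 <= delta p j * x * (t - y - x)).
  { apply Rmult_le_pos; [lra|]. assert (0 <= c * X) by (apply Rmult_le_pos; lra). lra. }
  lra.
Qed.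

Lemma d_decr_y p j x y : 0 <= delta p j -> 0 <= x -> 0 <= y -> d p j x y <= d p j x 0.
Proof. intros. rewrite !d_alt. assert (0 <= delta p j * x * y) by (apply Rmult_le_pos; [apply Rmult_le_pos|]; lra). lra. Qed.

Lemma gY_mono p j xs xt : lpos p j -> 0 <= xs -> xs <= xt -> gY p j xs <= gY p j xt.
Proof.
  intros (hd&hg&hl&hF&hS) h1 h2. unfold gY.
  assert (0 < 1 + delta p j * xs) by nra. assert (0 < 1 + delta p j * xt) by nra.
  apply Rmult_le_reg_r with ((1 + delta p j * xs) * (1 + delta p j * xt)).
  nra.
  unfold Rdiv.
  replace (gamma p j * Fb p j * xs * / (1 + delta p j * xs) * ((1 + delta p j * xs) * (1 + delta p j * xt)))
    with (gamma p j * Fb p j * xs * (1 + delta p j * xt)) by (field; lra).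
  replace (gamma p j * Fb p j * xt * / (1 + delta p j * xt) * ((1 + delta p j * xs) * (1 + delta p j * xt)))
    with (gamma p j * Fb p j * xt * (1 + delta p j * xs)) by (field; lra).
  assert (0 < gamma p j * Fb p j) by nra. nra.
Qed.

Lemma gY_nonneg p j x : lpos p j -> 0 <= x -> 0 <= gY p j x.
Proof.
  intros (hd&hg&hl&hF&hS) h. unfold gY. unfold Rdiv; apply Rmult_le_pos; [|apply Rlt_le, Rinv_0_lt_compat; nra].
  apply Rmult_le_pos; [apply Rlt_le, Rmult_lt_0_compat|]; lra.
Qed.

Definition Fk p n k s := fst (fpair p n k s).
Definition Gk p n k s := snd (fpair p n k s).
Definition Dk p n k s := d p (n - k) (Fk p n k s) (Gk p n k s).

Lemma F_S p n k s : Fk p n (S k) s = lam p (n-k) * Fb p (n-k) * Fk p n k s / Dk p n k s.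
Proof. unfold Dk, Fk, Gk. simpl. destruct (fpair p n k s). reflexivity. Qed.
Lemma G_S p n k s : Gk p n (S k) s = gY p (n-k) (Fk p n k s).
Proof. unfold Fk, Gk. simpl. destruct (fpair p n k s). reflexivity. Qed.
Lemma F_0 p n s : Fk p n 0 s = s. Proof. reflexivity. Qed.
Lemma G_0 p n s : Gk p n 0 s = 0. Proof. reflexivity. Qed.

Lemma FG_zero p n k : Fk p n k 0 = 0 /\ Gk p n k 0 = 0.
Proof.
  induction k as [|k [IH1 IH2]]. split; reflexivity.
  rewrite F_S, G_S, IH1. unfold gY, Rdiv. split; ring.
Qed.

Definition incr (f : R -> R) B := forall s t, 0 <= s -> t < B -> s < t -> f s < f t.
Definition nondecr (f : R -> R) B := forall s t, 0 <= s -> t < B -> s <= t -> f s <= f t.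

Lemma core p j (x y : R -> R) B z : lpos p j -> 0 < z < B ->
  (forall s, 0 <= s < B -> continuity_pt x s /\ continuity_pt y s) ->
  x 0 = 0 -> incr x B -> nondecr y B -> (forall s, 0 <= s < B -> 0 <= y s) ->
  d p j (x z) (y z) = 0 ->
  (forall s, 0 <= s < z -> 0 < d p j (x s) (y s)) /\
  (forall s, 0 <= s < B -> 0 < d p j (x s) (y s) -> s < z) /\
  (forall s, 0 <= s < z -> continuity_pt (fun s => lam p j * Fb p j * x s / d p j (x s) (y s)) s
                          /\ continuity_pt (fun s => gY p j (x s)) s) /\
  incr (fun s => lam p j * Fb p j * x s / d p j (x s) (y s)) z /\
  nondecr (fun s => gY p j (x s)) z /\
  (forall s, 0 <= s < z -> 0 <= gY p j (x s)) /\
  (forall M, exists s, 0 <= s < z /\ M < lam p j * Fb p j * x s / d p j (x s) (y s)).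
Proof.
  intros hp hz hc hx0 hxi hyn hy0 hdz.
  pose proof hp as (hd&hg&hl&hF&hS).
  assert (xpos : forall s, 0 <= s < B -> 0 <= x s).
  { intros s [h1 h2]. destruct (Req_dec s 0) as [->|hn]. lra.
    assert (x 0 < x s) by (apply hxi; lra). lra. }
  assert (Dpos : forall s, 0 <= s < z -> 0 < d p j (x s) (y s)).
  { intros s hs. pose proof (d_mono p j (x s) (x z) (y s) (y z) hp).
    assert (x s < x z) by (apply hxi; lra).
    assert (y s <= y z) by (apply hyn; lra).
    assert (0 <= x s) by (apply xpos; lra).
    rewrite hdz in H. specialize (H H2 H0 H1).
    assert (0 < 1 + delta p j * x z) by nra. nra. }
  assert (Dneg : forall s, z < s < B -> d p j (x s) (y s) < 0).
  { intros s hs. pose proof (d_mono p j (x z) (x s) (y z) (y s) hp).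
    assert (x z < x s) by (apply hxi; lra).
    assert (y z <= y s) by (apply hyn; lra).
    assert (0 <= x z) by (apply xpos; lra).
    rewrite hdz in H. specialize (H H2 H0 H1).
    assert (0 < 1 + delta p j * x z) by nra. nra. }
  split; [exact Dpos|].
  split.
  { intros s hs hD. destruct (Rlt_le_dec s z) as [h|h]; auto.
    destruct h as [h|h]. specialize (Dneg s (conj h (proj2 hs))). lra.
    subst s. lra. }
  split.
  { intros s hs. destruct (hc s ltac:(lra)) as [cx cy]. split.
    - apply cp_div. apply cp_mult; auto. apply cp_const. apply cp_d; auto.
      specialize (Dpos s hs). lra.
    - unfold gY. apply cp_div. apply cp_mult; auto. apply cp_const.
      apply cp_plus. apply cp_const. apply cp_mult; auto. apply cp_const.
      assert (0 <= x s) by (apply xpos; lra). nra. }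
  split.
  { intros s t h1 h2 h3.
    assert (xs0 : 0 <= x s) by (apply xpos; lra).
    assert (xst : x s < x t) by (apply hxi; lra).
    assert (yst : y s <= y t) by (apply hyn; lra).
    pose proof (d_mono p j (x s) (x t) (y s) (y t) hp xs0 xst yst) as K.
    assert (Ds : 0 < d p j (x s) (y s)) by (apply Dpos; lra).
    assert (Dt : 0 < d p j (x t) (y t)) by (apply Dpos; lra).
    assert (key : x s * d p j (x t) (y t) < x t * d p j (x s) (y s)).
    { assert (A1 : x t * (d p j (x t) (y t) * (1 + delta p j * x s)) < x t * (d p j (x s) (y s) * (1 + delta p j * x t)))
        by (apply Rmult_lt_compat_l; lra).
      assert (A2 : x s * (1 + delta p j * x t) <= x t * (1 + delta p j * x s)) by nra.
      assert (A3 : x s * d p j (x t) (y t) * (1 + delta p j * x t) <= x t * d p j (x t) (y t) * (1 + delta p j * x s)) by nra.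
      assert (0 < 1 + delta p j * x t) by nra.
      apply Rmult_lt_reg_r with (1 + delta p j * x t); auto. lra. }
    unfold Rdiv. apply Rmult_lt_reg_r with (d p j (x s) (y s) * d p j (x t) (y t)).
    nra.
    replace (lam p j * Fb p j * x s * / d p j (x s) (y s) * (d p j (x s) (y s) * d p j (x t) (y t)))
      with (lam p j * Fb p j * (x s * d p j (x t) (y t))) by (field; lra).
    replace (lam p j * Fb p j * x t * / d p j (x t) (y t) * (d p j (x s) (y s) * d p j (x t) (y t)))
      with (lam p j * Fb p j * (x t * d p j (x s) (y s))) by (field; lra).
    apply Rmult_lt_compat_l; auto. nra. }
  split.
  { intros s t h1 h2 h3. apply gY_mono; auto. apply xpos; lra.
    destruct h3 as [h3|h3]; [left; apply hxi; lra|subst; lra]. }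
  split.
  { intros s hs. apply gY_nonneg; auto. apply xpos; lra. }
  intros M.
  assert (xh : 0 < x (z/2)) by (rewrite <- hx0; apply hxi; lra).
  set (cc := lam p j * Fb p j * x (z/2)).
  assert (hcc : 0 < cc) by (unfold cc; apply Rmult_lt_0_compat; auto; nra).
  assert (cD : continuity_pt (fun s => d p j (x s) (y s)) z).
  { destruct (hc z ltac:(lra)). apply cp_d; auto. }
  set (eps := cc / (Rabs M + 1)).
  assert (he : 0 < eps) by (unfold eps; apply Rdiv_lt_0_compat; auto; pose proof (Rabs_pos M); lra).
  destruct (cp_eps _ _ cD eps he) as [del [hdel Hdel]].
  set (s := Rmax (z/2) (z - del/2)).
  assert (hs1 : z/2 <= s) by apply Rmax_l.
  assert (hs2 : z - del/2 <= s) by apply Rmax_r.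
  assert (hs3 : s < z) by (unfold s; apply Rmax_lub_lt; lra).
  exists s. split; [lra|].
  specialize (Hdel s ltac:(rewrite Rabs_left; lra)). simpl in Hdel. rewrite hdz, Rminus_0_r in Hdel.
  assert (Ds : 0 < d p j (x s) (y s)) by (apply Dpos; lra).
  rewrite Rabs_right in Hdel by lra.
  assert (xs : x (z/2) <= x s).
  { destruct (Req_dec s (z/2)) as [->|hn]. lra. left; apply hxi; lra. }
  assert (num : cc <= lam p j * Fb p j * x s).
  { unfold cc. apply Rmult_le_compat_l; auto. nra. }
  apply Rlt_le_trans with (cc / d p j (x s) (y s)).
  2: { unfold Rdiv. apply Rmult_le_compat_r; auto. left; apply Rinv_0_lt_compat; auto. }
  apply Rlt_le_trans with (Rabs M + 1). pose proof (Rle_abs M); lra.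
  unfold eps in Hdel.
  apply Rmult_le_reg_r with (d p j (x s) (y s)); auto.
  unfold Rdiv. rewrite Rmult_assoc, Rinv_l, Rmult_1_r by lra.
  assert (0 < Rabs M + 1) by (pose proof (Rabs_pos M); lra).
  apply Rmult_lt_compat_l with (r := Rabs M + 1) in Hdel; auto.
  unfold Rdiv in Hdel. rewrite <- Rmult_assoc, (Rmult_comm (Rabs M + 1) cc), Rmult_assoc, Rinv_r, Rmult_1_r in Hdel by lra.
  lra.
Qed.

Definition Inv p n k B :=
  0 < B /\
  (forall s, 0 <= s < B -> continuity_pt (Fk p n k) s /\ continuity_pt (Gk p n k) s) /\
  incr (Fk p n k) B /\ nondecr (Gk p n k) B /\
  (forall s, 0 <= s < B -> 0 <= Gk p n k s) /\
  (forall M, exists s, 0 <= s < B /\ M < Fk p n k s) /\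
  (forall k', (k' < k)%nat -> forall s, 0 <= s < B -> 0 < Dk p n k' s).

Lemma step_gen p n k B z : lpos p (n - k) -> 0 < z < B ->
  (forall s, 0 <= s < B -> continuity_pt (Fk p n k) s /\ continuity_pt (Gk p n k) s) ->
  incr (Fk p n k) B -> nondecr (Gk p n k) B ->
  (forall s, 0 <= s < B -> 0 <= Gk p n k s) ->
  (forall k', (k' < k)%nat -> forall s, 0 <= s < B -> 0 < Dk p n k' s) ->
  Dk p n k z = 0 ->
  Inv p n (S k) z /\ (forall s, 0 <= s < B -> 0 < Dk p n k s -> s < z).
Proof.
  intros hp hz hc hi hn hg hD hdz.
  destruct (core p (n-k) (Fk p n k) (Gk p n k) B z hp hz hc (proj1 (FG_zero p n k)) hi hn hg hdz)
    as (c1&c2&c3&c4&c5&c6&c7).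
  split; [|exact c2].
  split; [lra|]. split.
  { intros s hs. destruct (c3 s hs) as [a b]. split.
    - eapply cp_ext; [|exact a]. intros t. rewrite F_S. reflexivity.
    - eapply cp_ext; [|exact b]. intros t. rewrite G_S. reflexivity. }
  split. { intros s t h1 h2 h3. rewrite !F_S. apply c4; auto. }
  split. { intros s t h1 h2 h3. rewrite !G_S. apply c5; auto. }
  split. { intros s hs. rewrite G_S. apply c6; auto. }
  split. { intros M. destruct (c7 M) as [s [h1 h2]]. exists s. rewrite F_S. auto. }
  intros k' hk s hs. destruct (Nat.eq_dec k' k) as [->|hne]. apply c1; auto.
  apply hD; [lia|lra].
Qed.

Lemma ivt_D p n k B : lpos p (n - k) ->
  (forall s, 0 <= s < B -> continuity_pt (Fk p n k) s /\ continuity_pt (Gk p n k) s) ->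
  incr (Fk p n k) B -> (forall s, 0 <= s < B -> 0 <= Gk p n k s) ->
  forall s1, 0 <= s1 < B -> Sb p (n-k) < Fk p n k s1 ->
  exists z, 0 < z <= s1 /\ Dk p n k z = 0.
Proof.
  intros hp hc hi hg s1 hs1 hF.
  pose proof hp as (hd&hgm&hl&hFb&hS).
  destruct (FG_zero p n k) as [f0 g0].
  assert (s1p : 0 < s1).
  { destruct (Req_dec s1 0) as [e|e]. rewrite e, f0 in hF. lra. lra. }
  assert (D0 : Dk p n k 0 = Sb p (n-k)) by (unfold Dk; rewrite f0, g0; unfold d; ring).
  assert (D1 : Dk p n k s1 < 0).
  { unfold Dk. rewrite d_alt. assert (0 <= Gk p n k s1) by (apply hg; lra).
    assert (0 < Fb p (n-k) * (delta p (n-k) + gamma p (n-k)) * Fk p n k s1)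
      by (repeat apply Rmult_lt_0_compat; lra).
    assert (0 < 1 + delta p (n - k) * Fk p n k s1) by nra. nra. }
  destruct (IVT_interv (fun s => - Dk p n k s) 0 s1) as [z [hz1 hz2]]; auto.
  { intros a ha. apply cp_opp. unfold Dk. destruct (hc a ltac:(lra)). apply cp_d; auto. }
  lra. lra.
  exists z. assert (Dk p n k z = 0) by lra.
  split; auto. destruct (Req_dec z 0) as [e|e]. rewrite e in H. lra. lra.
Qed.

Lemma step p n k B : lpos p (n - k) -> (1 <= k)%nat -> Inv p n k B ->
  exists z, 0 < z < B /\ Inv p n (S k) z /\ Dk p n k z = 0 /\
    (forall s, 0 <= s < B -> 0 < Dk p n k s -> s < z).
Proof.
  intros hp hk (h1&h2&h3&h4&h5&h6&h7).
  destruct (h6 (Sb p (n-k))) as [s1 [hs1 hF]].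
  destruct (ivt_D p n k B hp h2 h3 h5 s1 hs1 hF) as [z [hz hdz]].
  exists z. destruct (step_gen p n k B z hp ltac:(lra) h2 h3 h4 h5 h7 hdz). auto.
  split; [lra|]. split; auto.
Qed.

Lemma base p n : lpos p n ->
  exists z, Inv p n 1 z /\ Dk p n 0 z = 0 /\ (forall s, 0 <= s -> 0 < Dk p n 0 s -> s < z).
Proof.
  intros hp. pose proof hp as (hd&hgm&hl&hFb&hS).
  set (B := Sb p n + 2).
  assert (hc : forall s, 0 <= s < B -> continuity_pt (Fk p n 0) s /\ continuity_pt (Gk p n 0) s).
  { intros s _. split. apply (cp_ext (fun t => t)); [reflexivity|apply cp_id]. apply (cp_ext (fun _ => 0)); [reflexivity|apply cp_const]. }
  assert (hi : incr (Fk p n 0) B) by (intros s t; rewrite !F_0; lra).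
  assert (hn : nondecr (Gk p n 0) B) by (intros s t; rewrite !G_0; lra).
  assert (hg : forall s, 0 <= s < B -> 0 <= Gk p n 0 s) by (intros; rewrite G_0; lra).
  assert (hp' : lpos p (n - 0)) by (rewrite Nat.sub_0_r; auto).
  destruct (ivt_D p n 0 B hp' hc hi hg (Sb p n + 1)) as [z [hz hdz]].
  unfold B; lra. rewrite F_0, Nat.sub_0_r. lra.
  exists z. destruct (step_gen p n 0 B z hp' ltac:(unfold B; lra) hc hi hn hg) as [H1 H2]; auto.
  intros; lia.
  split; auto. split; auto.
  intros s hs hD. destruct (Rlt_le_dec s B) as [h|h]. apply H2; auto; lra.
  unfold B in h. unfold Dk in hD. rewrite F_0, G_0, Nat.sub_0_r, d_alt in hD.
  assert (0 < Fb p n * (delta p n + gamma p n) * s) by (repeat apply Rmult_lt_0_compat; lra).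
  assert (0 < 1 + delta p n * s) by nra. nra.
Qed.

Definition BuildP p n K (b : nat -> R) :=
  (forall k, (1 <= k <= K)%nat -> Inv p n k (b k)) /\
  (forall k, (1 <= k < K)%nat -> b (S k) < b k /\ Dk p n k (b (S k)) = 0 /\
      (forall s, 0 <= s < b k -> 0 < Dk p n k s -> s < b (S k))) /\
  Dk p n 0 (b 1%nat) = 0 /\ (forall s, 0 <= s -> 0 < Dk p n 0 s -> s < b 1%nat).

Lemma build p n : (1 <= n)%nat -> params_pos p n ->
  forall K, (1 <= K <= n)%nat -> exists b, BuildP p n K b.
Proof.
  intros hn hpp. induction K as [|K IH]; intros hK. lia.
  destruct (Nat.eq_dec K 0) as [->|hK0].
  - destruct (base p n (lpos_of p n n hpp ltac:(lia))) as [z [h1 [h2 h3]]].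
    exists (fun _ => z). split; [|split; [|split]]; auto.
    intros k hk. replace k with 1%nat by lia. auto. intros k hk; lia.
  - destruct (IH ltac:(lia)) as [b [h1 [h2 [h3 h4]]]].
    destruct (step p n K (b K) (lpos_of p n (n-K) hpp ltac:(lia)) ltac:(lia) (h1 K ltac:(lia)))
      as [z [hz1 [hz2 [hz3 hz4]]]].
    exists (fun m => if Nat.eqb m (S K) then z else b m).
    assert (e1 : forall m, (m <= K)%nat -> (if Nat.eqb m (S K) then z else b m) = b m).
    { intros m hm. destruct (Nat.eqb_spec m (S K)); [lia|auto]. }
    split; [|split; [|split]].
    + intros k hk. cbv beta. destruct (Nat.eq_dec k (S K)) as [->|hne].
      rewrite Nat.eqb_refl; auto. rewrite e1 by lia. apply h1; lia.
    + intros k hk. cbv beta. rewrite (e1 k) by lia. destruct (Nat.eq_dec k K) as [->|hne].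
      rewrite Nat.eqb_refl. split; [lra|split; auto].
      rewrite !e1 by lia. apply h2; lia.
    + cbv beta. rewrite e1 by lia. auto.
    + cbv beta. rewrite e1 by lia. auto.
Qed.

Lemma Inv_nonneg p n k B : Inv p n k B -> forall s, 0 <= s < B -> 0 <= Fk p n k s.
Proof.
  intros (h1&h2&h3&_) s hs. destruct (Req_dec s 0) as [->|e].
  rewrite (proj1 (FG_zero p n k)); lra.
  assert (Fk p n k 0 < Fk p n k s) by (apply h3; lra). rewrite (proj1 (FG_zero p n k)) in H; lra.
Qed.

Lemma cont_not_sing g x : continuity_pt g x -> ~ singular_at g x.
Proof.
  intros hc hs. destruct (cp_eps g x hc 1 Rlt_0_1) as [del [hd H]].
  destruct (hs (Rabs (g x) + 1) del hd) as [t [_ [ht1 ht2]]].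
  specialize (H t ht1).
  assert (Rabs (g t) <= Rabs (g t - g x) + Rabs (g x)).
  { replace (g t) with ((g t - g x) + g x) at 1 by ring. apply Rabs_triang. }
  lra.
Qed.

Lemma Inv_sing p n k B : Inv p n k B -> min_pos_sing (Fk p n k) B.
Proof.
  intros hI. pose proof hI as (h1&h2&h3&h4&h5&h6&h7).
  split; auto. split.
  - intros M eps he. destruct (h6 (Rabs M)) as [s0 [hs0 hM]].
    set (t := Rmax s0 (B - Rmin eps B / 2)).
    assert (Rmin eps B <= eps) by apply Rmin_l. assert (Rmin eps B <= B) by apply Rmin_r.
    assert (0 < Rmin eps B) by (apply Rmin_glb_lt; lra).
    assert (s0 <= t) by apply Rmax_l. assert (B - Rmin eps B / 2 <= t) by apply Rmax_r.
    assert (t < B) by (apply Rmax_lub_lt; lra).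
    exists t. split; [lra|]. split. rewrite Rabs_left; lra.
    assert (Fk p n k s0 <= Fk p n k t).
    { destruct (Req_dec s0 t) as [e|e]. rewrite e; lra. left; apply h3; lra. }
    pose proof (Rle_abs M). pose proof (Inv_nonneg p n k B hI t ltac:(lra)).
    rewrite (Rabs_right (Fk p n k t)); lra.
  - intros s hs. apply cont_not_sing. apply h2; lra.
Qed.

Lemma mps_unique g b1 b2 : min_pos_sing g b1 -> min_pos_sing g b2 -> b1 = b2.
Proof.
  intros (a1&s1&n1) (a2&s2&n2). destruct (Rtotal_order b1 b2) as [h|[h|h]]; auto.
  exfalso; apply (n2 b1); auto. exfalso; apply (n1 b2); auto.
Qed.

Lemma Inv_cont p n k B : Inv p n k B -> cont_on_Ico (Fk p n k) 0 B.
Proof.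
  intros (h1&h2&_) x hx eps he. destruct (cp_eps _ _ (proj1 (h2 x hx)) eps he) as [del [hd H]].
  exists del. split; auto.
Qed.

Lemma Inv_onto p n k B : Inv p n k B -> onto_nonneg_Ico (Fk p n k) 0 B.
Proof.
  intros hI. split. apply (Inv_nonneg p n k B hI).
  pose proof hI as (h1&h2&h3&h4&h5&h6&h7).
  intros y hy. destruct (Req_dec y 0) as [->|hy0].
  exists 0. split. lra. apply FG_zero.
  destruct (h6 y) as [s1 [hs1 hF]].
  assert (s1p : 0 < s1).
  { destruct (Req_dec s1 0) as [e|e]. rewrite e, (proj1 (FG_zero p n k)) in hF. lra. lra. }
  destruct (IVT_interv (fun s => Fk p n k s - y) 0 s1) as [z [hz1 hz2]]; auto.
  { intros a ha. apply cp_minus. apply h2; lra. apply cp_const. }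
  rewrite (proj1 (FG_zero p n k)). lra. lra.
  exists z. split. lra. lra.
Qed.

Lemma incr_unique g B1 B2 : 0 < B1 -> incr g B2 -> (forall M, exists s, 0 <= s < B1 /\ M < g s) ->
  B2 <= B1.
Proof.
  intros h0 hi hu. destruct (Rle_lt_dec B2 B1) as [h|h]; auto. exfalso.
  destruct (hu (g B1)) as [s [hs hM]]. assert (g s < g B1) by (apply hi; lra). lra.
Qed.

Lemma layer_eq p q j : same_rates p q -> Fb q j = Fb p j -> Sb q j = Sb p j ->
  lam q j = lam p j /\ (forall x y, d q j x y = d p j x y) /\ (forall x, gY q j x = gY p j x).
Proof.
  intros (e1&e2&e3&e4&e5&e6) hF hS.
  unfold d, gY, lam, gamma, delta. rewrite e1, e2, e3, e4, e5, e6, hF, hS.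
  split; [reflexivity|split; reflexivity].
Qed.

Lemma transfer p q n m : same_rates p q ->
  (forall j, (m <= j)%nat -> Fb q j = Fb p j /\ Sb q j = Sb p j) ->
  forall k, (k + m <= n + 1)%nat -> forall s, fpair q n k s = fpair p n k s.
Proof.
  intros hs hj. induction k as [|k IH]; intros hk s. reflexivity.
  simpl. rewrite IH by lia. destruct (fpair p n k s) as [a b].
  destruct (hj (n-k)%nat ltac:(lia)) as [hF hS].
  destruct (layer_eq p q (n-k) hs hF hS) as (l1&l2&l3).
  rewrite l1, l2, l3, hF. reflexivity.
Qed.

Lemma prodR_top g m : prodR g m m = 1.
Proof. destruct m; simpl. reflexivity. rewrite Nat.ltb_irrefl. reflexivity. Qed.

Lemma prodR_low g i m : (i < m)%nat -> prodR g i m = g (S i) * prodR g (S i) m.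
Proof.
  induction m as [|m IH]; intros h. lia.
  simpl. replace (i <? S m)%nat with true by (symmetry; apply Nat.ltb_lt; lia).
  destruct (Nat.eq_dec i m) as [->|hne].
  - rewrite prodR_top, Nat.ltb_irrefl. ring.
  - replace (S i <? S m)%nat with true by (symmetry; apply Nat.ltb_lt; lia).
    rewrite IH by lia. ring.
Qed.

Lemma prod_formula p n k : (k <= n)%nat -> forall s,
  Fk p n k s = prodR (fun j => lam p j * Fb p j) (n - k) n * s /
     prodR (fun j => d p j (ff p n j s) (fY p n (S j) s)) (n - k) n.
Proof.
  induction k as [|k IH]; intros hk s.
  - rewrite Nat.sub_0_r, !prodR_top. rewrite F_0. field.
  - rewrite F_S, IH by lia.
    rewrite (prodR_low (fun j => lam p j * Fb p j) (n - S k) n) by lia.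
    rewrite (prodR_low (fun j => d p j (ff p n j s) (fY p n (S j) s)) (n - S k) n) by lia.
    replace (S (n - S k)) with (n - k)%nat by lia.
    assert (E : d p (n - k) (ff p n (n - k) s) (fY p n (S (n - k)) s) = Dk p n k s).
    { unfold Dk, ff, fY, Fk, Gk. replace (n - (n - k))%nat with k by lia.
      replace (n + 1 - S (n - k))%nat with k by lia. reflexivity. }
    rewrite E. unfold Rdiv. rewrite Rinv_mult. ring.
Qed.

Section BM.
Variables (p : cascade) (n : nat) (S0 S1 F Y0 Y1 : nat -> R).
Hypothesis hn : (1 <= n)%nat.
Hypothesis hpp : params_pos p n.
Hypothesis hB : BMSS p n S0 S1 F Y0 Y1.

Definition Yn j := if Nat.eqb j n then 0 else Y0 (S j).

Lemma bm_eq j : (1 <= j <= n)%nat ->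
  Y0 j = gamma p j * F j * S1 j /\ Y1 j = delta p j * F j * S1 j /\
  lam p j * F j * S1 j = S0 j * S1 (j - 1)%nat /\ Fb p j = F j + Y1 j /\
  Sb p j = S0 j + S1 j + Y0 j + Y1 j + Yn j.
Proof. intros hj. destruct hB as [[h _] _]. apply h; auto. Qed.

Lemma bm_nn j : (1 <= j <= n)%nat ->
  0 <= S0 j /\ 0 <= S1 j /\ 0 <= F j /\ 0 <= Y0 j /\ 0 <= Y1 j.
Proof. intros hj. destruct hB as [_ [_ h]]. apply h; auto. Qed.

Lemma bm_F j : (1 <= j <= n)%nat -> 0 < F j.
Proof.
  intros hj. destruct (bm_eq j hj) as (e1&e2&e3&e4&e5). destruct (bm_nn j hj) as (n1&n2&n3&n4&n5).
  destruct (lpos_of p n j hpp hj) as (hd&hg&hl&hF&hS).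
  destruct n3 as [h|h]; auto. rewrite e4, e2, <- h in hF. lra.
Qed.

Lemma bm_Yn j : (j <= n)%nat -> 0 <= Yn j.
Proof.
  intros hj. unfold Yn. destruct (Nat.eqb_spec j n). lra. apply (bm_nn (S j)); lia.
Qed.

Lemma bm_d j : (1 <= j <= n)%nat -> d p j (S1 j) (Yn j) = S0 j * (1 + delta p j * S1 j).
Proof.
  intros hj. destruct (bm_eq j hj) as (e1&e2&e3&e4&e5).
  rewrite d_alt, e5, e4, e2, e1. ring.
Qed.

Lemma bm_up j : (1 <= j <= n)%nat -> S1 (j - 1)%nat = 0 -> S1 j = 0.
Proof.
  intros hj h. destruct (bm_eq j hj) as (e1&e2&e3&e4&e5).
  destruct (lpos_of p n j hpp hj) as (hd&hg&hl&hF&hS). pose proof (bm_F j hj).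
  rewrite h, Rmult_0_r in e3.
  assert (0 < lam p j * F j) by (apply Rmult_lt_0_compat; auto).
  destruct (Rmult_integral _ _ e3) as [e|e]; auto. lra.
Qed.

Lemma bm_down k : (k <= n)%nat -> S1 n = 0 -> S1 (n - k)%nat = 0 /\ Yn (n - k) = 0.
Proof.
  intros hk h. induction k as [|k IH].
  - rewrite Nat.sub_0_r. split; auto. unfold Yn. rewrite Nat.eqb_refl. auto.
  - destruct (IH ltac:(lia)) as [h1 h2]. set (j := (n - k)%nat) in *.
    assert (hj : (1 <= j <= n)%nat) by (unfold j; lia).
    destruct (bm_eq j hj) as (e1&e2&e3&e4&e5).
    destruct (lpos_of p n j hpp hj) as (hd&hg&hl&hF&hS).
    assert (ej : (n - S k)%nat = (j - 1)%nat) by (unfold j; lia).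
    rewrite ej. split.
    + rewrite h1, Rmult_0_r in e3. rewrite h1, h2 in e5. rewrite e1, e2, h1 in e5.
      assert (S0 j = Sb p j) by lra.
      symmetry in e3. destruct (Rmult_integral _ _ e3) as [e|e]; auto. lra.
    + unfold Yn. destruct (Nat.eqb_spec (j - 1) n). lia.
      replace (S (j - 1)) with j by lia. rewrite e1, h1. ring.
Qed.

Lemma bm_S1pos j : (j <= n)%nat -> 0 < S1 j.
Proof.
  intros hj. assert (nn : 0 <= S1 j).
  { destruct j. destruct hB as [_ [h _]]. auto. apply (bm_nn (S j)); lia. }
  destruct nn as [h|h]; auto. exfalso.
  assert (S1 n = 0).
  { assert (forall m, (j + m <= n)%nat -> S1 (j + m)%nat = 0).
    { induction m as [|m IH]; intros hm. rewrite Nat.add_0_r; auto.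
      apply bm_up. lia. replace (j + S m - 1)%nat with (j + m)%nat by lia. apply IH; lia. }
    replace n with (j + (n - j))%nat by lia. apply H; lia. }
  destruct (bm_down n ltac:(lia) H) as [h1 h2].
  rewrite Nat.sub_diag in h1, h2. unfold Yn in h2.
  destruct (Nat.eqb_spec 0 n). lia.
  destruct hB as [[_ hE] _]. destruct hpp as [hEb _]. lra.
Qed.

Lemma bm_S0pos j : (1 <= j <= n)%nat -> 0 < S0 j.
Proof.
  intros hj. destruct (bm_eq j hj) as (e1&e2&e3&e4&e5).
  destruct (lpos_of p n j hpp hj) as (hd&hg&hl&hF&hS). pose proof (bm_F j hj).
  pose proof (bm_S1pos j ltac:(lia)). pose proof (bm_S1pos (j-1) ltac:(lia)).
  destruct (bm_nn j hj) as (n1&_).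
  assert (0 < lam p j * F j * S1 j) by (apply Rmult_lt_0_compat; [apply Rmult_lt_0_compat|]; auto).
  destruct n1 as [h|h]; auto. rewrite <- h in e3. lra.
Qed.

Lemma bm_dpos j : (1 <= j <= n)%nat -> 0 < d p j (S1 j) (Yn j).
Proof.
  intros hj. rewrite bm_d by auto. pose proof (bm_S0pos j hj). pose proof (bm_S1pos j ltac:(lia)).
  destruct (lpos_of p n j hpp hj) as (hd&_). apply Rmult_lt_0_compat; auto. nra.
Qed.

Lemma bm_alpha j a : (1 <= j <= n)%nat -> 0 < a -> d p j a 0 = 0 -> S1 j < a.
Proof.
  intros hj ha hda. pose proof (bm_dpos j hj).
  pose proof (bm_S1pos j ltac:(lia)). pose proof (bm_Yn j ltac:(lia)).
  pose proof (lpos_of p n j hpp hj) as hp. pose proof hp as (hd&_).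
  assert (0 < d p j (S1 j) 0) by (pose proof (d_decr_y p j (S1 j) (Yn j)); lra).
  destruct (Rlt_le_dec (S1 j) a) as [h|[h|h]]; auto; exfalso.
  - pose proof (d_mono p j a (S1 j) 0 0 hp ltac:(lra) h ltac:(lra)) as K.
    rewrite hda, Rmult_0_l in K. assert (0 < 1 + delta p j * a) by nra.
    assert (0 < d p j (S1 j) 0 * (1 + delta p j * a)) by (apply Rmult_lt_0_compat; auto). lra.
  - subst. lra.
Qed.

Lemma bm_track k : (k <= n)%nat -> S1 (n - k)%nat = Fk p n k (S1 n) /\ Yn (n - k) = Gk p n k (S1 n).
Proof.
  induction k as [|k IH]; intros hk.
  - rewrite Nat.sub_0_r. split; auto. unfold Yn. rewrite Nat.eqb_refl. reflexivity.
  - destruct (IH ltac:(lia)) as [h1 h2]. set (j := (n - k)%nat) in *.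
    assert (hj : (1 <= j <= n)%nat) by (unfold j; lia).
    destruct (bm_eq j hj) as (e1&e2&e3&e4&e5).
    destruct (lpos_of p n j hpp hj) as (hd&hg&hl&hF&hS).
    assert (ej : (n - S k)%nat = (j - 1)%nat) by (unfold j; lia).
    pose proof (bm_S0pos j hj). pose proof (bm_S1pos j ltac:(lia)). pose proof (bm_F j hj).
    rewrite ej, F_S, G_S. fold j. split.
    + unfold Dk. fold j. rewrite <- h1, <- h2, bm_d by auto.
      rewrite e4, e2.
      apply Rmult_eq_reg_l with (S0 j). 2: lra. rewrite <- e3. field.
      split. nra. lra.
    + unfold Yn. destruct (Nat.eqb_spec (j - 1) n). lia.
      replace (S (j - 1)) with j by lia. rewrite <- h1. unfold gY.
      rewrite e1, e4, e2. field. nra.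
Qed.

End BM.

Lemma root_unique p j a c : lpos p j -> 0 < a -> 0 < c -> d p j a 0 = 0 -> d p j c 0 = 0 -> a = c.
Proof.
  intros hp ha hc h1 h2. pose proof hp as (hd&_).
  destruct (Rtotal_order a c) as [h|[h|h]]; auto; exfalso.
  - pose proof (d_mono p j a c 0 0 hp ltac:(lra) h ltac:(lra)). rewrite h1, h2 in H. lra.
  - pose proof (d_mono p j c a 0 0 hp ltac:(lra) h ltac:(lra)). rewrite h1, h2 in H. lra.
Qed.

Lemma setSb_pos p n k t : params_pos p n -> 0 < t -> params_pos (setSb p k t) n.
Proof.
  intros [hE h] ht. split. exact hE. intros i hi. destruct (h i hi) as (a&b&c&e&f&g&hh&l).
  cbn. repeat split; auto. destruct (Nat.eqb i k); auto.
Qed.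

Lemma setSb_same p k t : same_rates p (setSb p k t).
Proof. repeat split. Qed.

Lemma d_setSb p k t x y : d (setSb p k t) k x y =
  (1 + delta p k * x) * (t - y - x) - Fb p k * (delta p k + gamma p k) * x.
Proof. rewrite d_alt. cbn. rewrite Nat.eqb_refl. reflexivity. Qed.

Lemma Dk_ff p n i x : (i < n)%nat ->
  d p (S i) (ff p n (S i) x) (fY p n (S (S i)) x) = Dk p n (n - S i) x.
Proof.
  intros h. unfold Dk, ff, fY, Fk, Gk. replace (n + 1 - S (S i))%nat with (n - S i)%nat by lia.
  replace (n - (n - S i))%nat with (S i) by lia. reflexivity.
Qed.

Lemma bmss_lt p n S0 S1 F Y0 Y1 b : (1 <= n)%nat -> params_pos p n -> BMSS p n S0 S1 F Y0 Y1 ->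
  BuildP p n n b -> forall k, (1 <= k <= n)%nat -> S1 n < b k.
Proof.
  intros hn hpp hB (hI&hL&hD0&hb1). induction k as [|k IH]; intros hk. lia.
  assert (s0 : 0 <= S1 n) by (pose proof (bm_S1pos p n S0 S1 F Y0 Y1 hn hpp hB n ltac:(lia)); lra).
  destruct (Nat.eq_dec k 0) as [->|hk0].
  - apply hb1; auto. unfold Dk. rewrite Nat.sub_0_r, F_0, G_0.
    pose proof (bm_dpos p n S0 S1 F Y0 Y1 hn hpp hB n ltac:(lia)). unfold Yn in H.
    rewrite Nat.eqb_refl in H. auto.
  - destruct (hL k ltac:(lia)) as (_&_&h). apply h. split; auto. apply IH; lia.
    destruct (bm_track p n S0 S1 F Y0 Y1 hn hpp hB k ltac:(lia)) as [t1 t2].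
    unfold Dk. rewrite <- t1, <- t2. apply (bm_dpos p n S0 S1 F Y0 Y1 hn hpp hB); lia.
Qed.

Lemma part_d_mid p n b i : (1 <= n)%nat -> params_pos p n -> BuildP p n n b -> (S i < n)%nat ->
  forall eps, 0 < eps -> exists T, forall t, T < t -> 0 < t ->
    exists bb, min_pos_sing (ff (setSb p (S i) t) n i) bb /\ Rabs (bb - b (n - S i)%nat) < eps.
Proof.
  intros hn hpp hb hi eps he.
  set (k' := (n - S i)%nat).
  assert (hk' : (1 <= k' < n)%nat) by (unfold k'; lia).
  destruct hb as (hI&hL&_).
  pose proof (hI k' ltac:(lia)) as hIk. pose proof hIk as (i1&i2&i3&i4&i5&i6&i7).
  pose proof (lpos_of p n (S i) hpp ltac:(lia)) as hp. pose proof hp as (hd&hg&hl&hF&hS).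
  set (s0 := Rmax 0 (b k' - eps/2)).
  assert (hs0a : 0 <= s0) by apply Rmax_l.
  assert (hs0b : b k' - eps/2 <= s0) by apply Rmax_r.
  assert (hs0c : s0 < b k') by (apply Rmax_lub_lt; lra).
  set (X := Fk p n k' s0). set (Y := Gk p n k' s0).
  exists (Y + X + Fb p (S i) * (delta p (S i) + gamma p (S i)) * X).
  intros t hT ht.
  set (q := setSb p (S i) t).
  assert (hqp : params_pos q n) by (apply setSb_pos; auto).
  destruct (build q n hn hqp n ltac:(lia)) as [b' (hI'&hL'&_)].
  assert (tr : forall s, fpair q n k' s = fpair p n k' s).
  { intros s. apply (transfer p q n (S (S i))). apply setSb_same.
    intros j hj. cbn. destruct (Nat.eqb_spec j (S i)). lia. split; reflexivity.
    unfold k'; lia. }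
  assert (trF : forall s, Fk q n k' s = Fk p n k' s) by (intros; unfold Fk; rewrite tr; auto).
  assert (trG : forall s, Gk q n k' s = Gk p n k' s) by (intros; unfold Gk; rewrite tr; auto).
  pose proof (hI' k' ltac:(lia)) as hIq. pose proof hIq as (j1&j2&j3&j4&j5&j6&j7).
  assert (eqb : b' k' = b k').
  { apply Rle_antisym.
    - apply (incr_unique (Fk p n k') (b k') (b' k')); auto.
      intros s t1 h1 h2 h3. rewrite <- !trF. apply j3; auto.
    - apply (incr_unique (Fk p n k') (b' k') (b k')); auto.
      intros M. destruct (j6 M) as [s [h1 h2]]. exists s. rewrite <- trF. auto. }
  destruct (hL' k' ltac:(lia)) as (l1&l2&l3).
  exists (b' (S k')). split.
  { replace (ff q n i) with (Fk q n (S k')).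
    apply Inv_sing. apply hI'. lia.
    unfold ff, Fk. replace (n - i)%nat with (S k') by (unfold k'; lia). reflexivity. }
  assert (gt : s0 < b' (S k')).
  { destruct (Rlt_le_dec s0 (b' (S k'))) as [h|h]; auto. exfalso.
    pose proof (hI' (S k') ltac:(lia)) as (m1&_).
    set (z := b' (S k')) in *.
    unfold Dk in l2. rewrite trF, trG in l2.
    replace (n - k')%nat with (S i) in l2 by (unfold k'; lia).
    unfold q in l2. rewrite d_setSb in l2.
    assert (hx : 0 <= Fk p n k' z <= X).
    { split. apply (Inv_nonneg p n k' (b k') hIk). lra.
      destruct h as [h|h]. left; apply i3; lra. unfold X; rewrite h; lra. }
    assert (hy : 0 <= Gk p n k' z <= Y).
    { split. apply i5; lra. apply i4; lra. }
    pose proof (d_pos_big p (S i) _ _ X Y t hp hx hy hT). lra. }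
  rewrite Rabs_left; lra.
Qed.

Lemma part_d_top p n i : (1 <= n)%nat -> params_pos p n -> S i = n ->
  forall M, exists T, forall t, T < t -> 0 < t ->
    exists bb, min_pos_sing (ff (setSb p (S i) t) n i) bb /\ M < bb.
Proof.
  intros hn hpp hi M.
  pose proof (lpos_of p n (S i) hpp ltac:(lia)) as hp. pose proof hp as (hd&hg&hl&hF&hS).
  set (X := Rmax M 0).
  assert (hX : M <= X) by apply Rmax_l. assert (hX0 : 0 <= X) by apply Rmax_r.
  exists (0 + X + Fb p (S i) * (delta p (S i) + gamma p (S i)) * X).
  intros t hT ht.
  set (q := setSb p (S i) t).
  assert (hqp : params_pos q n) by (apply setSb_pos; auto).
  destruct (build q n hn hqp n ltac:(lia)) as [b' (hI'&_&hD0&_)].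
  exists (b' 1%nat). split.
  { replace (ff q n i) with (Fk q n 1).
    apply Inv_sing. apply hI'. lia.
    unfold ff, Fk. replace (n - i)%nat with 1%nat by lia. reflexivity. }
  destruct (Rlt_le_dec M (b' 1%nat)) as [h|h]; auto. exfalso.
  pose proof (hI' 1%nat ltac:(lia)) as (m1&_).
  unfold Dk in hD0. rewrite F_0, G_0, Nat.sub_0_r in hD0.
  rewrite <- hi in hD0. unfold q in hD0. rewrite d_setSb in hD0.
  assert (hx : 0 <= b' 1%nat <= X) by lra.
  assert (hy : 0 <= 0 <= 0) by lra.
  pose proof (d_pos_big p (S i) _ _ X 0 t hp hx hy hT). lra.
Qed.

Theorem mainTheorem6 (n : nat) (p : cascade) :
  (1 <= n)%nat -> params_pos p n ->
  forall alpha : nat -> R,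
  (forall j, (1 <= j <= n)%nat -> 0 < alpha j /\ d p j (alpha j) 0 = 0) ->
  exists beta : nat -> R,
    (forall i, (i < n)%nat ->
       0 < beta i /\
       ff p n i 0 = 0 /\
       cont_on_Ico (ff p n i) 0 (beta i) /\
       incr_on_Ico (ff p n i) 0 (beta i) /\
       onto_nonneg_Ico (ff p n i) 0 (beta i) /\
       min_pos_sing (ff p n i) (beta i) /\
       d p (S i) (ff p n (S i) (beta i)) (fY p n (S (S i)) (beta i)) = 0 /\
       (forall S0 S1 F Y0 Y1, BMSS p n S0 S1 F Y0 Y1 ->
          0 <= S1 n < beta i /\ S1 i = ff p n i (S1 n)) /\
       (forall q : cascade, same_rates p q ->
          (forall j, (S i <= j)%nat -> Fb q j = Fb p j /\ Sb q j = Sb p j) ->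
          forall s, ff q n i s = ff p n i s) /\
       (forall s, 0 <= s < beta i ->
          ff p n i s =
            prodR (fun j => lam p j * Fb p j) i n * s /
            prodR (fun j => d p j (ff p n j s) (fY p n (S j) s)) i n) /\
       ((S i < n)%nat ->
          forall eps, 0 < eps -> exists T, forall t, T < t -> 0 < t ->
            exists b, min_pos_sing (ff (setSb p (S i) t) n i) b /\
                      Rabs (b - beta (S i)) < eps) /\
       (S i = n ->
          forall M, exists T, forall t, T < t -> 0 < t ->
            exists b, min_pos_sing (ff (setSb p (S i) t) n i) b /\ M < b)) /\
    beta (n - 1)%nat = alpha n /\
    (forall i, (S (S i) <= n)%nat -> beta i < beta (S i)) /\
    (forall S0 S1 F Y0 Y1, BMSS p n S0 S1 F Y0 Y1 ->
       forall j, (1 <= j <= n)%nat -> S1 j < alpha j).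
Proof.
  intros hn hpp alpha halpha.
  destruct (build p n hn hpp n ltac:(lia)) as [b hb].
  pose proof hb as (hI&hL&hD0&hb1).
  assert (hb1a : b 1%nat = alpha n).
  { destruct (halpha n ltac:(lia)) as [a1 a2].
    pose proof (hI 1%nat ltac:(lia)) as (m1&_).
    apply (root_unique p n); auto. apply (lpos_of p n n hpp); lia.
    unfold Dk in hD0. rewrite F_0, G_0, Nat.sub_0_r in hD0. auto. }
  exists (fun i => b (n - i)%nat).
  split; [|split; [|split]].
  - intros i hi. cbv beta.
    assert (hk : (1 <= n - i <= n)%nat) by lia.
    pose proof (hI (n - i)%nat hk) as hIk.
    change (ff p n i) with (Fk p n (n - i)).
    split; [apply hIk|].
    split; [apply FG_zero|].
    split; [apply Inv_cont; auto|].
    split; [intros x y h1 h2 h3; apply hIk; lra|].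
    split; [apply Inv_onto; auto|].
    split; [apply Inv_sing; auto|].
    split.
    { rewrite Dk_ff by auto. destruct (Nat.eq_dec (S i) n) as [e|e].
      - rewrite e, Nat.sub_diag. replace (n - i)%nat with 1%nat by lia. auto.
      - replace (n - i)%nat with (S (n - S i)) by lia. apply hL. lia. }
    split.
    { intros S0 S1 F Y0 Y1 hB. split. split.
      pose proof (bm_S1pos p n S0 S1 F Y0 Y1 hn hpp hB n ltac:(lia)); lra.
      apply (bmss_lt p n S0 S1 F Y0 Y1 b); auto.
      destruct (bm_track p n S0 S1 F Y0 Y1 hn hpp hB (n - i) ltac:(lia)) as [t1 _].
      replace (n - (n - i))%nat with i in t1 by lia. auto. }
    split.
    { intros q hq hj s. change (ff q n i) with (Fk q n (n - i)). unfold Fk.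
      rewrite (transfer p q n (S i) hq hj); auto. lia. }
    split.
    { intros s _. rewrite prod_formula by lia. replace (n - (n - i))%nat with i by lia. reflexivity. }
    split.
    { intros hsi eps he. change (ff (setSb p (S i) ?t) n i) with (Fk (setSb p (S i) t) n (n - i)).
      destruct (part_d_mid p n b i hn hpp hb hsi eps he) as [T HT]. exists T.
      intros t h1 h2. destruct (HT t h1 h2) as [bb [m1 m2]]. exists bb. split; auto. }
    { intros hsi M. apply part_d_top; auto. }
  - replace (n - (n - 1))%nat with 1%nat by lia. auto.
  - intros i hi. cbv beta. replace (n - i)%nat with (S (n - S i)) by lia. apply hL. lia.
  - intros S0 S1 F Y0 Y1 hB j hj. destruct (halpha j hj) as [a1 a2].
    apply (bm_alpha p n S0 S1 F Y0 Y1 hn hpp hB); auto.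
Qed.
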